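(* Under the hypotheses of Theorem 7.7 (restated: $(\mathcal{F}_\lambda)$ a coherent family, $t:\mathbb{F}_q\to\mathbb{F}_\mathfrak{l}$ the trace function of $\mathcal{F}=\mathcal{F}_\lambda$, $\mathcal{I}$ a family of sums with $\mathcal{F}$ being $\bigcup_{k\in\mathcal{I}}\mathcal{I}(k)$-compatible), we have \[\Phi(t,\mathcal{I}',a)=\frac1{|\mathbb{F}_\mathfrak{l}|}+O\big(V(t,\mathcal{I})^{1/2}\big)\] uniformly in $a\in\mathbb{F}_\mathfrak{l}$, where $\Phi(t,\mathcal{I}',a)=\frac1q\sum_{x\in\mathbb{F}_q}\Phi(t,\mathcal{I}+x,a)=\frac{|\{(k,x)\in\mathcal{I}\times\mathbb{F}_q: S(t,\mathcal{I}(k)+x)\equiv a\}|}{q|\mathcal{I}|}$.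
   Context: Notation: $S(t,E)=\sum_{y\in E}t(y)$; a family of sums is a finite set $\mathcal{I}$ with an injective map $k\mapsto\mathcal{I}(k)\subset\mathbb{F}_q$; $\Phi(t,\mathcal{I}+x,a)=|\{k\in\mathcal{I}:S(t,\mathcal{I}(k)+x)\equiv a\}|/|\mathcal{I}|$; $V(t,\mathcal{I})=\sum_{a\in\mathbb{F}_\mathfrak{l}}\frac1q\sum_{x\in\mathbb{F}_q}(\Phi(t,\mathcal{I}+x,a)-|\mathbb{F}_\mathfrak{l}|^{-1})^2$. Coherent family: irreducible sheaves $\mathcal{F}_\lambda$ of $\mathbb{F}_\mathfrak{l}$-modules on $\mathbb{P}^1_{\mathbb{F}_{q(\lambda)}}$ ($\ell$-adic middle-extension sheaves, i.e. Galois representations of $\mathrm{Gal}(\mathbb{F}_q(T)^{sep}/\mathbb{F}_q(T))$) with uniformly bounded conductor, and either all Kummer sheaves $\mathcal{L}_{\chi(f)}$ (trace function $\chi\circ f\bmod\mathfrak{l}$) with monodromy $\mu_d(\mathbb{F}_\mathfrak{l})$; or $d$ prime, arithmetic = geometric monodromy $\mu_d(\mathbb{F}_\mathfrak{l})$, no geometric isomorphism $[+a]^*\mathcal{F}_\lambda\cong\mathcal{F}_\lambda^{\otimes i}$ ($1\le i<d$, $a\neq0$); or arithmetic = geometric monodromy conjugate to $\mathrm{SL}_n(\mathbb{F}_\mathfrak{l})$ or $\mathrm{Sp}_n(\mathbb{F}_\mathfrak{l})$ ($n$ even) and no geometric isomorphism $[+a]^*\mathcal{F}_\lambda\cong\mathcal{L}\otimes\sigma(\mathcal{F}_\lambda)$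 or $\mathcal{L}\otimes D(\sigma(\mathcal{F}_\lambda))$ ($a\ne0$, $\sigma\in\mathrm{Aut}(\mathbb{F}_\mathfrak{l})$, $\mathcal{L}$ rank one). $E$-compatibility is automatic except for Kummer sheaves $\mathcal{L}_{\chi(f_1/f_2)}$, where it means $\sum_{i=1}^mx_i\ne0$ for $x_i\in E$, $1\le m\le\deg f_1$. *)

(* Defs.v *)
From HB Require Import structures.
From mathcomp Require Import all_boot all_order all_algebra all_field.
Set Implicit Arguments. Unset Strict Implicit. Unset Printing Implicit Defensive.
Import Order.TTheory GRing.Theory Num.Theory.
Local Open Scope ring_scope.

(* K plays the role of F_q, L the role of the coefficient field F_l,
   t : K -> L a function (trace function), Ind the index set of a
   family of sums, Ifam : Ind -> {set K} the (injective) map k |-> I(k). *)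

Definition Ssum (K L : finFieldType) (t : K -> L) (E : {set K}) : L :=
  \sum_(y in E) t y.

Definition shift (K : finFieldType) (E : {set K}) (x : K) : {set K} :=
  [set y + x | y in E].

Definition Phi (R : rcfType) (K L : finFieldType) (Ind : finType)
  (Ifam : Ind -> {set K}) (t : K -> L) (x : K) (a : L) : R :=
  (#|[set k : Ind | Ssum t (shift (Ifam k) x) == a]|)%:R / (#|Ind|)%:R.

Definition Phi' (R : rcfType) (K L : finFieldType) (Ind : finType)
  (Ifam : Ind -> {set K}) (t : K -> L) (a : L) : R :=
  (#|K|)%:R^-1 * \sum_(x : K) Phi R Ifam t x a.

Definition Vvar (R : rcfType) (K L : finFieldType) (Ind : finType)
  (Ifam : Ind -> {set K}) (t : K -> L) : R :=
  \sum_(a : L) ((#|K|)%:R^-1 *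
     \sum_(x : K) (Phi R Ifam t x a - (#|L|)%:R^-1) ^+ 2).

(* Main.v *)
Require Import Defs.
From HB Require Import structures.
From mathcomp Require Import all_boot all_order all_algebra all_field.
From mathcomp Require Import ring lra.
Import Order.TTheory GRing.Theory Num.Theory.
Local Open Scope ring_scope.

Lemma mean_sq (R : rcfType) (T : finType) (d : T -> R) :
  (0 < #|T|)%N ->
  (#|T|%:R^-1 * \sum_x d x) ^+ 2 <= #|T|%:R^-1 * \sum_x d x ^+ 2.
Proof.
move=> hT.
set n : R := #|T|%:R.
have hn : 0 < n by rewrite /n ltr0n.
set m := n^-1 * \sum_x d x.
have h0 : 0 <= \sum_x (d x - m) ^+ 2 by apply: sumr_ge0 => x _; exact: sqr_ge0.
have e : \sum_x (d x - m) ^+ 2 = \sum_x d x ^+ 2 - 2 * m * \sum_x d x + n * m ^+ 2.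
  rewrite (eq_bigr (fun x => d x ^+ 2 - (2 * m) * d x + m ^+ 2)); last first.
    by move=> x _; rewrite sqrrB mulr2n mulrDl mul1r; congr (_ - _ + _); ring.
  rewrite big_split /= sumrB /= -mulr_sumr sumr_const /n.
  by rewrite -[m ^+ 2 *+ _]mulr_natl.
have es : \sum_x d x = n * m by rewrite /m mulVKf // gt_eqF.
rewrite e es in h0.
have : n * m ^+ 2 <= \sum_x d x ^+ 2 by nra.
move=> h; rewrite -(ler_pM2l hn); apply: (le_trans h); rewrite le_eqVlt; apply/orP; left; apply/eqP; field; rewrite gt_eqF //.
Qed.

Theorem corollary7p8 (R : rcfType) :
  exists C : R, 0 < C /\
  forall (K L : finFieldType) (Ind : finType) (Ifam : Ind -> {set K})
         (t : K -> L),
    injective Ifam -> (0 < #|Ind|)%N ->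
    forall a : L,
      `| Phi' R Ifam t a - (#|L|)%:R^-1 | <= C * Num.sqrt (Vvar R Ifam t).
Proof.
exists 1; split => //.
move=> K L Ind Ifam t _ _ a; rewrite mul1r.
have hK : (0 < #|K|)%N by apply/card_gt0P; exists 0.
set d := fun x => Phi R Ifam t x a - (#|L|)%:R^-1.
have hn : 0 < (#|K|%:R : R) by rewrite ltr0n.
have -> : Phi' R Ifam t a - (#|L|)%:R^-1 = #|K|%:R^-1 * \sum_x d x.
  rewrite /Phi' /d sumrB sumr_const -[_ *+ #|_|]mulr_natl mulrBr; congr (_ - _).
  rewrite mulrA mulVf ?mul1r // gt_eqF //.
rewrite -sqrtr_sqr.
apply: le_trans (ler_wsqrtr (@mean_sq R K d hK)) _.
apply: ler_wsqrtr.
rewrite /Vvar (bigD1 a) //= lerDl.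
apply: sumr_ge0 => b _; apply: mulr_ge0; first by rewrite invr_ge0 ler0n.
by apply: sumr_ge0 => x _; exact: sqr_ge0.
Qed.
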